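(* Let $T$ be a $G$-spaced star with center $r$ and leaves $[m]$. Let $I\subsetneq[m]$ and let $T'$ be the $G$-spaced star with center $r$ (with the same $V_r,B_r$) and leaves $[m]\setminus I$, with the same spaces attached to the leaves it shares with $T$. Let $\theta$ be a $G$-invariant tensor in $\bigotimes_{v\in I}V_v^*$. Then the map $L(T)\to L(T')$ defined by $\bigotimes_{v\in[m]}x_v\mapsto\theta\bigl(\bigotimes_{v\in I}x_v\bigr)\cdot\bigotimes_{v\in[m]\setminus I}x_v$ maps $\mathcal{X}(T)$ into $\mathcal{X}(T')$.
   Context: $G$ is a finite Abelian group, $K$ an infinite field over which every finite-dimensional $G$-representation splits into one-dimensional irreducibles. A $G$-spaced star with center $r$ and leaves $[m]=\{0,\ldots,m-1\}$ consists of a star-shaped tree with these vertices, and for each vertex $v$ a finite-dimensional $G$-representation $V_v$ with a distinguished basis $B_v$ permuted by $G$ and the symmetric bilinear form $(\cdot|\cdot)_v$ making $B_v$ orthonormal. $L(T)=\bigotimes_{v\in[m]}V_v$. A $G$-representation of $T$ is a tuple $A=(A_{rv})_{v\in[m]}$ of $G$-invariant elements $A_{rv}\in V_r\otimes V_v$; writing $A_{rv}=\sum_{b\in B_r}b\otimes a_{b,v}$, set $\Psi_T(A)=\sum_{b\in B_r}\bigotimes_{v\in[m]}a_{b,v}\in L(T)$ (this is the contraction of $\bigotimes_vA_{rv}$ at the center along $\sum_{b\in B_r}(b|\cdot)_r^{\otimes m}$). The equivariant model $\mathcal{X}(T)$ is the Zariski closure of the set of all $\Psi_T(A)$. *)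

(* Defs.v *)
From HB Require Import structures.
From mathcomp Require Import all_boot all_order all_algebra all_fingroup.
From mathcomp Require Import mxrepresentation.
From mathcomp Require Import mpoly.

Set Implicit Arguments.
Unset Strict Implicit.
Unset Printing Implicit Defensive.

Import GRing.Theory.
Local Open Scope ring_scope.

Definition reps_split (K : fieldType) (gT : finGroupType) : Prop :=
  forall (n : nat) (rG : mx_representation K [set: gT]%G n),
    exists2 P : 'M[K]_n, P \in unitmx &
      forall g : gT, is_diag_mx (P *m rG g *m invmx P).

Definition infinite_field (K : fieldType) : Prop :=
  forall s : seq K, exists x : K, x \notin s.

Section Star.
Variables (K : fieldType) (gT : finGroupType).

(* A vertex v carries the permutation representation V_v = K^{B_v}, where the
   finite set B_v (the distinguished orthonormal basis) is permuted by gT via a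
   (total) group action.  Tensors in (x)_{v in L} V_v are functions on the
   product of the bases, i.e. coordinates in the product basis. *)
Definition tuples (L : finType) (B : L -> finType) := {dffun forall v : L, B v}.

Definition inv_edge (Br Bv : finType) (tor : {action gT &-> Br})
    (tov : {action gT &-> Bv}) (A : Br -> Bv -> K) : Prop :=
  forall (g : gT) (b : Br) (c : Bv), A (tor b g) (tov c g) = A b c.

Definition Psi (L : finType) (Br : finType) (B : L -> finType)
    (A : forall v : L, Br -> B v -> K) : {ffun tuples B -> K} :=
  [ffun x : tuples B => \sum_(b : Br) \prod_(v : L) A v b (x v)].

Definition model_image (L : finType) (Br : finType) (tor : {action gT &-> Br})
    (B : L -> finType) (to : forall v : L, {action gT &-> B v})
    (X : {ffun tuples B -> K}) : Prop :=
  exists A : forall v : L, Br -> B v -> K,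
    (forall v : L, inv_edge tor (to v) (A v)) /\ X = Psi A.

Definition coords (X : finType) (x : {ffun X -> K}) : 'I_#|X| -> K :=
  fun i => x (enum_val i).

Definition zariski_closure (X : finType) (S : {ffun X -> K} -> Prop)
    (x : {ffun X -> K}) : Prop :=
  forall p : {mpoly K[#|X|]},
    (forall y, S y -> p.@[coords y] = 0) -> p.@[coords x] = 0.

Definition equivariant_model (L : finType) (Br : finType)
    (tor : {action gT &-> Br}) (B : L -> finType)
    (to : forall v : L, {action gT &-> B v}) : {ffun tuples B -> K} -> Prop :=
  zariski_closure (model_image tor to).

Definition leavesI (m : nat) (I : {set 'I_m}) := {v : 'I_m | v \in I}.
Definition leavesC (m : nat) (I : {set 'I_m}) := {v : 'I_m | v \notin I}.

Definition inv_form (m : nat) (I : {set 'I_m}) (B : 'I_m -> finType)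
    (to : forall v : 'I_m, {action gT &-> B v})
    (theta : tuples (fun v : leavesI I => B (val v)) -> K) : Prop :=
  forall (g : gT) (z : tuples (fun v : leavesI I => B (val v))),
    theta [ffun v : leavesI I => to (val v) (z v) g] = theta z.

Definition contract (m : nat) (I : {set 'I_m}) (B : 'I_m -> finType)
    (theta : tuples (fun v : leavesI I => B (val v)) -> K)
    (X : {ffun tuples B -> K}) : {ffun tuples (fun v : leavesC I => B (val v)) -> K} :=
  [ffun y : tuples (fun v : leavesC I => B (val v)) =>
     \sum_(x : tuples B | [forall v : leavesC I, x (val v) == y v])
        theta [ffun v : leavesI I => x (val v)] * X x].

End Star.

(* Main.v *)
Require Import Defs.
From HB Require Import structures.
From mathcomp Require Import all_boot all_order all_algebra all_fingroup.
From mathcomp Require Import mxrepresentation mpoly.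
Set Implicit Arguments. Unset Strict Implicit. Unset Printing Implicit Defensive.
Import GRing.Theory.
Local Open Scope ring_scope.

Lemma prod_sig (R : comNzRingType) (I : finType) (P : pred I) (F : I -> R) :
  \prod_(i | P i) F i = \prod_(x : {x | P x}) F (val x).
Proof.
rewrite (reindex_omap (val : {x | P x} -> I) insub); last first.
  by move=> i Pi; rewrite insubT.
by apply: eq_bigl=> -[i iA]/=; rewrite insubT ?iA /= eqxx.
Qed.

Lemma prod_split (R : comNzRingType) (m : nat) (I : {set 'I_m}) (F : 'I_m -> R) :
  \prod_(v : 'I_m) F v =
  \prod_(w : leavesI I) F (val w) * \prod_(w : leavesC I) F (val w).
Proof.
rewrite (bigID (fun v => v \in I)) /=.
by rewrite (prod_sig (fun v => v \in I)) (prod_sig (fun v => v \notin I)).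
Qed.

Section Merge.
Variables (m : nat) (I : {set 'I_m}) (B : 'I_m -> finType).
Definition tI := tuples (fun v : leavesI I => B (val v)).
Definition tC := tuples (fun v : leavesC I => B (val v)).

Definition merge (y : tC) (z : tI) : tuples B :=
  [ffun v : 'I_m => match (v \in I) as b return (v \in I) = b -> B v with
     | true => fun h => z (exist _ v h)
     | false => fun h => y (exist _ v (negbT h)) end erefl].

Definition restrI (x : tuples B) : tI := [ffun w : leavesI I => x (val w)].

Lemma merge_I y z (w : leavesI I) : merge y z (val w) = z w.
Proof.
case: w => v hv /=; rewrite ffunE.
move: (erefl (v \in I)); rewrite {2 3}hv => h.
by rewrite (eq_irrelevance h hv).
Qed.

Lemma merge_C y z (w : leavesC I) : merge y z (val w) = y w.
Proof.
case: w => v hv /=; rewrite ffunE.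
move: (erefl (v \in I)); rewrite {2 3}(negbTE hv) => h.
by rewrite (eq_irrelevance (negbT h) hv).
Qed.

Lemma merge_restr (y : tC) (x : tuples B) :
  [forall v : leavesC I, x (val v) == y v] -> merge y (restrI x) = x.
Proof.
move=> /forallP H; apply/ffunP => v; rewrite ffunE.
move: (erefl (v \in I)); case: {2 3}(v \in I) => h.
  by rewrite ffunE.
by move/eqP: (H (exist _ v (negbT h))) => /= ->.
Qed.

Lemma restr_merge y z : restrI (merge y z) = z.
Proof. by apply/ffunP => w; rewrite ffunE merge_I. Qed.

Lemma merge_agree y z : [forall v : leavesC I, merge y z (val v) == y v].
Proof. by apply/forallP => w; rewrite merge_C. Qed.
End Merge.

Lemma actK_tot (gT : finGroupType) (T : finType) (to : {action gT &-> T}) (x : T) (g : gT) :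
  to (to x g) g^-1%g = x.
Proof. exact: actK. Qed.

Lemma actKV_tot (gT : finGroupType) (T : finType) (to : {action gT &-> T}) (x : T) (g : gT) :
  to (to x g^-1%g) g = x.
Proof. exact: actKV. Qed.

Lemma image_contract (gT : finGroupType) (K : fieldType)
    (Br : finType) (tor : {action gT &-> Br})
    (m : nat) (B : 'I_m -> finType) (to : forall v : 'I_m, {action gT &-> B v})
    (I : {set 'I_m}) (HI : I \proper [set: 'I_m])
    (theta : tuples (fun v : leavesI I => B (val v)) -> K)
    (Htheta : inv_form to theta)
    (X : {ffun tuples B -> K}) :
  model_image tor to X ->
  model_image tor (fun v : leavesC I => to (val v)) (contract theta X).
Proof.
have [_ [v0 _ v0I]] := properP HI.
pose w0 : leavesC I := exist _ v0 v0I.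
move=> [A [HA ->]].
pose c := fun b => \sum_(z : tI I B) theta z * \prod_(w : leavesI I) A (val w) b (z w).
have Hc : forall g b, c (tor b g) = c b.
  move=> g b; rewrite /c.
  pose act (h : gT) (z : tI I B) : tI I B := [ffun w : leavesI I => to (val w) (z w) h].
  rewrite (reindex (act g)) /=; last first.
    exists (act g^-1%g).
      move=> z _; apply/ffunP => w; rewrite !ffunE.
      have H := (actK_tot (to (val w)) (z w) g). exact H.
    move=> z _; apply/ffunP => w; rewrite !ffunE.
    have H := (actKV_tot (to (val w)) (z w) g). exact H.
  apply: eq_bigr => z _; rewrite Htheta; congr (_ * _).
  by apply: eq_bigr => w _; rewrite ffunE HA.
exists (fun w b e => (if w == w0 then c b else 1) * A (val w) b e).
split.
  by move=> w g b e; rewrite HA Hc.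
apply/ffunP => y; rewrite !ffunE.
under eq_bigr do rewrite ffunE mulr_sumr.
rewrite exchange_big /=; apply: eq_bigr => b _.
rewrite big_split /= -big_mkcond big_pred1_eq.
rewrite (reindex (merge y)) /=; last first.
  exists (@restrI m I B) => x; rewrite inE => Hx.
    by rewrite restr_merge.
  by rewrite merge_restr.
rewrite (eq_bigl predT); last by move=> z; rewrite merge_agree.
rewrite /c mulr_suml; apply: eq_bigr => z _.
change (theta (restrI I (merge y z)) * \prod_(v < m) A v b (merge y z v) = theta z * \prod_w A (val w) b (z w) * \prod_(i : leavesC I) A (val i) b (y i)); rewrite restr_merge (prod_split I) mulrA; congr (_ * _ * _).
  by apply: eq_bigr => w _; rewrite merge_I.
by apply: eq_bigr => w _; rewrite merge_C.
Qed.

Lemma lin_contract (K : fieldType) (m : nat) (B : 'I_m -> finType) (I : {set 'I_m})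
    (theta : tuples (fun v : leavesI I => B (val v)) -> K) :
  exists f : {ffun tuples B -> K} -> {ffun tuples (fun v : leavesC I => B (val v)) -> K} ,
  f = contract theta /\
  forall p : {mpoly K[#|tuples (fun v : leavesC I => B (val v))|]},
  exists q : {mpoly K[#|tuples B|]}, forall x, q.@[coords x] = p.@[coords (f x)].
Proof.
exists (contract theta); split => // p.
pose lin (y : tuples (fun v : leavesC I => B (val v))) : {mpoly K[#|tuples B|]} :=
  \sum_(x : tuples B | [forall v : leavesC I, x (val v) == y v])
     theta [ffun v : leavesI I => x (val v)] *: 'X_(enum_rank x).
pose lq := [tuple lin (enum_val i) | i < #|tuples (fun v : leavesC I => B (val v))|].
exists (p \mPo lq) => x.
rewrite comp_mpoly_meval; apply: meval_eq => i.
rewrite tnth_mktuple /coords ffunE raddf_sum /=.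
by apply: eq_bigr => x' _; rewrite mevalZ mevalXU enum_rankK.
Qed.

Theorem lemma6p4 (gT : finGroupType) (K : fieldType)
    (abG : abelian [set: gT]) (Kinf : infinite_field K)
    (Ksplit : reps_split K gT)
    (Br : finType) (tor : {action gT &-> Br})
    (m : nat) (B : 'I_m -> finType) (to : forall v : 'I_m, {action gT &-> B v})
    (I : {set 'I_m}) (HI : I \proper [set: 'I_m])
    (theta : tuples (fun v : leavesI I => B (val v)) -> K)
    (Htheta : inv_form to theta)
    (X : {ffun tuples B -> K}) :
  equivariant_model tor to X ->
  equivariant_model tor (fun v : leavesC I => to (val v)) (contract theta X).
Proof.
move=> HX p Hp.
have [f [-> Hf]] := lin_contract theta.
have [q Hq] := Hf p.
rewrite -Hq; apply: HX => y Hy.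
rewrite Hq; apply: Hp.
exact: image_contract.
Qed.
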